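(* Let $N\ge1$, $T>0$, $M>0$, and consider the problem of minimizing $\mathbb V(T)=\frac1N\sum_{i=1}^N\xi_i(T)^2$ over $\alpha\in\mathcal U_M$, where $\xi$ solves $\dot\xi_i=-\xi_i+(1-\alpha_i)\bar\xi$, $\bar\xi=\frac1N\sum_j\xi_j$, with fixed initial datum satisfying $\bar\xi(0)>0$ and $\xi_1(0)\ge\xi_2(0)\ge\dots\ge\xi_N(0)$. Then there exists an optimal control whose trajectory satisfies: for all $t\in[0,T]$ and all $i<j$, $\xi_i(t)\ge\xi_j(t)$.
   Context: $\mathcal U_M$ is the set of measurable $\alpha:[0,T]\to[0,1]^N$ with $\sum_i\alpha_i(t)\le M$ for all $t$. An optimal control for this problem exists. *)

(* Defs.v *)
From HB Require Import structures.
From mathcomp Require Import all_boot all_order all_algebra.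
From mathcomp Require Import all_classical all_reals all_analysis.
Set Implicit Arguments. Unset Strict Implicit. Unset Printing Implicit Defensive.
Import Order.TTheory GRing.Theory Num.Theory.
Local Open Scope classical_set_scope.
Local Open Scope ring_scope.

Definition mean (R : realType) (N : nat) (x : 'I_N -> R) : R :=
  N%:R^-1 * \sum_(j < N) x j.

Definition Vfun (R : realType) (N : nat) (x : 'I_N -> R) : R :=
  N%:R^-1 * \sum_(i < N) x i ^+ 2.

Definition admissible (R : realType) (N : nat) (T M : R)
  (a : R -> 'I_N -> R) : Prop :=
  (forall i : 'I_N, measurable_fun `[0, T] (fun t => a t i)) /\
  (forall t, 0 <= t <= T ->
     (forall i : 'I_N, 0 <= a t i <= 1) /\ \sum_(i < N) a t i <= M).

Definition rhs (R : realType) (N : nat) (a : R -> 'I_N -> R)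
  (xi : R -> 'I_N -> R) (i : 'I_N) (s : R) : R :=
  - xi s i + (1 - a s i) * mean (xi s).

Definition is_solution (R : realType) (N : nat) (T : R) (xi0 : 'I_N -> R)
  (a : R -> 'I_N -> R) (xi : R -> 'I_N -> R) : Prop :=
  forall (i : 'I_N) (t : R), 0 <= t <= T ->
    (@lebesgue_measure R).-integrable `[0%R, t]%classic (EFin \o rhs a xi i) /\
    (xi t i - xi0 i)%:E =
       (\int[@lebesgue_measure R]_(s in `[0%R, t]%classic) (rhs a xi i s)%:E)%E.

Definition optimal (R : realType) (N : nat) (T M : R) (xi0 : 'I_N -> R)
  (a : R -> 'I_N -> R) (xi : R -> 'I_N -> R) : Prop :=
  admissible T M a /\ is_solution T xi0 a xi /\
  forall (b : R -> 'I_N -> R) (eta : R -> 'I_N -> R),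
    admissible T M b -> is_solution T xi0 b eta ->
    Vfun (xi T) <= Vfun (eta T).

(* Main.v *)
Require Import Defs.
From HB Require Import structures.
From mathcomp Require Import all_boot all_order all_algebra.
From mathcomp Require Import all_classical all_reals all_analysis.
From mathcomp Require Import ring lra measurable_realfun perm.
Set Implicit Arguments. Unset Strict Implicit. Unset Printing Implicit Defensive.
Import Order.TTheory GRing.Theory Num.Theory.
Import numFieldNormedType.Exports.
Local Open Scope classical_set_scope.
Local Open Scope ring_scope.

Section Mono.
Context {R : realType}.

Lemma mono_right (G : R -> R) (a b : R) : a <= b ->
  (forall e : R, 0 < e -> exists del : R, 0 < del /\ forall x y, a <= x -> x <= y ->
      y <= b -> y - x < del -> `|G y - G x| < e) ->
  (forall s, a <= s -> s < b -> exists eta : R, 0 < eta /\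
      forall y, s <= y -> y <= b -> y - s < eta -> G s <= G y) ->
  G a <= G b.
Proof.
move=> ab Gc Gr.
pose S := [set y | a <= y <= b /\ forall w, a <= w <= y -> G a <= G w].
have Sa : S a.
  split; first by rewrite lexx ab.
  by move=> w /andP[aw wa]; have -> : w = a by apply/eqP; rewrite eq_le aw wa.
have hS : has_sup S.
  split; first by exists a.
  by exists b => y [/andP[_ yb] _].
set y := sup S.
have ay : a <= y by apply: sup_upper_bound.
have yb : y <= b by apply: ge_sup; [exists a | move=> z [/andP[_ zb] _]].
have Sy : S y.
  split; first by rewrite ay yb.
  move=> w /andP[aw wy]; have [wy'|] := ltP w y.
    have yw0 : 0 < y - w by rewrite subr_gt0.
    have [z [/andP[_ _] Hz] yz] := sup_adherent yw0 hS.
    by apply: Hz; rewrite aw /=; rewrite -/y in yz; lra.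
  move=> yw; have -> : w = y by apply/eqP; rewrite eq_le wy yw.
  apply/ler_addgt0Pr => e e0.
  have [del [del0 Hd]] := Gc e e0.
  have [ay'|] := ltP a y; last first.
    move=> ya; have -> : y = a by apply/eqP; rewrite eq_le ya ay.
    by rewrite lerDl ltW.
  have [z [/andP[az zb] Hz] yz] := sup_adherent del0 hS.
  have zy : z <= y by apply: sup_upper_bound => //; split; [rewrite az zb|].
  rewrite -/y in yz.
  have := Hd z y az zy yb ltac:(lra).
  have := Hz z; rewrite az lexx => /(_ isT).
  move=> Gaz; rewrite ltr_norml => /andP[h _]; apply: (le_trans Gaz).
  by rewrite ltrNl opprB in h; apply/ltW; rewrite -ltrBlDl.
have [yb'|] := ltP y b; last first.
  move=> by'; have <- : y = b by apply/eqP; rewrite eq_le yb by'.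
  by case: Sy => _; apply; rewrite ay lexx.
have [eta [eta0 He]] := Gr y ay yb'.
pose y' := y + Num.min eta (b - y) / 2.
have m0 : 0 < Num.min eta (b - y) by rewrite lt_min eta0 subr_gt0.
have mle1 : Num.min eta (b - y) <= eta by rewrite ge_min lexx.
have mle2 : Num.min eta (b - y) <= b - y by rewrite ge_min lexx orbT.
have Sy' : S y'.
  split; first by rewrite /y'; apply/andP; split; lra.
  move=> w /andP[aw wy']; have [wy|yw] := leP w y.
    by case: Sy => _; apply; rewrite aw wy.
  case: Sy => _ /(_ y); rewrite ay lexx => /(_ isT) Gay.
  apply: (le_trans Gay); apply: He; rewrite /y' in wy'; lra.
have := sup_upper_bound hS Sy'; rewrite -/y /y'; lra.
Qed.

End Mono.

Section Core.
Context {R : realType}.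
Local Notation mu := (@lebesgue_measure R).

Lemma small_int (T : R) (g : R -> R) : mu.-integrable `[0, T] (EFin \o g) ->
  forall e : R, 0 < e -> exists del : R, 0 < del /\
   forall x y, 0 <= x -> x <= y -> y <= T -> y - x < del ->
     \int[mu]_(s in `]x, y]) `|g s| < e.
Proof.
move=> ig e e0.
have ig' : mu.-integrable setT (EFin \o (g \_ `[0, T])).
  by rewrite -restrict_EFin; apply/integrable_restrict => //=; rewrite setTI.
have [del [del0 H]] := integral_normr_continuous ig' e0.
exists del; split => // x y x0 xy yT yx.
have mxy : (mu `]x, y]%classic < del%:E)%E.
  rewrite lebesgue_measure_itv /= lte_fin.
  case: ifPn => // xy'; by rewrite -EFinD lte_fin.
have := H _ (measurable_itv `]x, y]) mxy.
congr (_ < _); apply: eq_Rintegral => s; rewrite inE /= in_itv /= => /andP[xs sy].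
rewrite patchE ifT //; rewrite inE /= in_itv /=.
by rewrite (le_trans x0 (ltW xs)) (le_trans sy yT).
Qed.

Lemma split_int (T : R) (g : R -> R) x y :
  mu.-integrable `[0, T] (EFin \o g) -> 0 <= x -> x <= y -> y <= T ->
  \int[mu]_(s in `[0, y]) g s =
  \int[mu]_(s in `[0, x]) g s + \int[mu]_(s in `]x, y]) g s.
Proof.
move=> ig x0 xy yT.
have ig' : mu.-integrable `[0, y] (EFin \o g).
  apply: integrableS ig => //; apply: subset_itvl; by rewrite bnd_simp.
have := @Rintegral_itvB R g (BLeft 0) (BRight y) x ig'.
rewrite !bnd_simp => /(_ x0 xy) <-.
by rewrite addrC subrK.
Qed.

Variables (T D0 : R) (d D : R -> R).
Hypotheses (T0 : 0 <= T) (D00 : D0 <= 0)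
  (intd : mu.-integrable `[0, T] (EFin \o d))
  (HD : forall t, 0 <= t -> t <= T -> D t = D0 + \int[mu]_(s in `[0, t]) d s).

Lemma intS (g : R -> R) x y : mu.-integrable `[0, T] (EFin \o g) ->
  0 <= x -> y <= T -> mu.-integrable `]x, y] (EFin \o g).
Proof.
move=> ig x0 yT; apply: integrableS ig => //.
by apply: subset_itvScc; rewrite bnd_simp.
Qed.

Lemma Dint x y : 0 <= x -> x <= y -> y <= T ->
  D y - D x = \int[mu]_(s in `]x, y]) d s.
Proof.
move=> x0 xy yT.
rewrite HD ?(le_trans x0 xy) // HD ?(le_trans xy yT) //.
rewrite (split_int intd x0 xy yT).
lra.
Qed.

Lemma Duc (e : R) : 0 < e -> exists del : R, 0 < del /\
  forall x y, 0 <= x -> x <= y -> y <= T -> y - x < del -> `|D y - D x| < e.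
Proof.
move=> e0; have [del [del0 H]] := small_int intd e0.
exists del; split => // x y x0 xy yT yx.
rewrite Dint //; apply: le_lt_trans (H x y x0 xy yT yx).
apply: le_normr_Rintegral => //; exact: intS.
Qed.

Lemma Dc s (e : R) : 0 <= s -> s <= T -> 0 < e -> exists del : R, 0 < del /\
  forall w, 0 <= w -> w <= T -> `|w - s| < del -> `|D w - D s| < e.
Proof.
move=> s0 sT e0; have [del [del0 H]] := Duc e0.
exists del; split => // w w0 wT wsd; have [ws|sw] := leP w s.
  rewrite distrC; apply: H => //.
  by rewrite distrC ger0_norm ?subr_ge0 in wsd.
apply: H => //; first exact: ltW.
by rewrite ger0_norm ?subr_ge0 ?ltW in wsd.
Qed.

Lemma mD : measurable_fun `[0, T] D.
Proof.
have mint : measurable_fun `[0, T] (fun x => parameterized_integral mu 0 x d).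
  exact: (subspace_continuous_measurable_fun (measurable_itv _)
            (parameterized_integral_continuous T0 intd)).
apply: (eq_measurable_fun (fun x => D0 + parameterized_integral mu 0 x d)).
  move=> x; rewrite inE /= in_itv /= => /andP[x0 xT].
  by rewrite HD.
by apply: measurable_funD => //; exact: measurable_cst.
Qed.

Lemma last_nonpos s y : 0 <= s -> s <= y -> y <= T -> D s <= 0 ->
  exists z, [/\ s <= z, z <= y, D z <= 0 &
    forall w, z < w -> w <= y -> 0 < D w].
Proof.
move=> s0 sy yT Ds.
pose S := [set z | s <= z <= y /\ D z <= 0].
have hS : has_sup S.
  split; first by exists s; split => //; rewrite lexx sy.
  by exists y => z [/andP[_ ?] _].
set z := sup S.
have sz : s <= z by apply: sup_upper_bound => //; split => //; rewrite lexx sy.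
have zy : z <= y by apply: ge_sup; [exists s; split => //; rewrite lexx sy|move=> w [/andP[]]].
have Dz : D z <= 0.
  rewrite leNgt; apply/negP => Dz0.
  have [del [del0 Hd]] := Dc (le_trans s0 sz) (le_trans zy yT) Dz0.
  have [w [/andP[sw wy] Dw] zw] := sup_adherent del0 hS.
  rewrite -/z in zw.
  have wz : w <= z by apply: sup_upper_bound => //; split => //; rewrite sw wy.
  have := Hd w (le_trans s0 sw) (le_trans wy yT).
  rewrite ler0_norm ?subr_le0 // => /(_ ltac:(lra)).
  rewrite ltr_norml => /andP[+ _]; lra.
exists z; split => // w zw wy; rewrite ltNge; apply/negP => Dw.
have : w <= z by apply: sup_upper_bound => //; split => //; rewrite wy (le_trans sz (ltW zw)).
lra.
Qed.


Lemma md : measurable_fun `[0, T] d.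
Proof. by apply/measurable_EFinP; exact: (measurable_int mu intd). Qed.

Definition fD s := if 0 < D s then d s else 0.
Definition hD (del : R) s := if 0 < D s then (if D s < del then `|d s| else 0) else 0.

Lemma mcond (c : R) : measurable_fun `[0, T] (fun s => c < D s).
Proof. by apply: measurable_fun_ltr => //; exact: mD. Qed.

Lemma mcond' (c : R) : measurable_fun `[0, T] (fun s => D s < c).
Proof. by apply: measurable_fun_ltr => //; exact: mD. Qed.

Lemma mfD : measurable_fun `[0, T] fD.
Proof.
apply: measurable_fun_if => //; first exact: mcond.
  by apply: measurable_funS md => //; exact: subIsetl.
Qed.

Lemma mhD del : measurable_fun `[0, T] (hD del).
Proof.
apply: measurable_fun_if => //; first exact: mcond.
  apply: measurable_fun_if => //.
  - by apply: (mcond 0).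
  - by apply: measurable_funS (mcond' del) => //; exact: subIsetl.
  - apply: measurableT_comp => //; apply: measurable_funS md => //.
    by move=> x [[]].
Qed.

Lemma ifD : mu.-integrable `[0, T] (EFin \o fD).
Proof.
apply: (le_integrable _ _ _ intd) => //; first by apply/measurable_EFinP; exact: mfD.
move=> x _ /=; rewrite lee_fin /fD; case: ifP => _ //.
by rewrite normr0 normr_ge0.
Qed.

Lemma ihD del : mu.-integrable `[0, T] (EFin \o hD del).
Proof.
apply: (le_integrable _ _ _ intd) => //; first by apply/measurable_EFinP; exact: mhD.
move=> x _ /=; rewrite lee_fin /hD; case: ifP => _; last by rewrite normr0 normr_ge0.
by case: ifP => _; rewrite ?normr_id // normr0 normr_ge0.
Qed.

Definition J (g : R -> R) x y := \int[mu]_(s in `]x, y]) g s.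
Definition Phi t := \int[mu]_(s in `[0, t]) fD s - Num.max (D t) 0.
Definition Hh del t := \int[mu]_(s in `[0, t]) hD del s.

Lemma Jsplit g x z y : mu.-integrable `[0, T] (EFin \o g) ->
  0 <= x -> x <= z -> z <= y -> y <= T -> J g x y = J g x z + J g z y.
Proof.
move=> ig x0 xz zy yT; rewrite /J.
have := split_int ig x0 (le_trans xz zy) yT.
have := split_int ig (le_trans x0 xz) zy yT.
have := split_int ig x0 xz (le_trans zy yT).
lra.
Qed.

Lemma PhiD x y : 0 <= x -> x <= y -> y <= T ->
  Phi y - Phi x = J fD x y - (Num.max (D y) 0 - Num.max (D x) 0).
Proof.
move=> x0 xy yT; rewrite /Phi /J (split_int ifD x0 xy yT); lra.
Qed.

Lemma HhD del x y : 0 <= x -> x <= y -> y <= T ->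
  Hh del y - Hh del x = J (hD del) x y.
Proof.
move=> x0 xy yT; rewrite /Hh /J (split_int (ihD del) x0 xy yT); lra.
Qed.

Lemma J_ge0 del x y : 0 <= J (hD del) x y.
Proof.
apply: Rintegral_ge0 => w _; rewrite /hD.
by case: ifP => // _; case: ifP.
Qed.

Lemma J0 x y : J (fun=> 0) x y = 0.
Proof. by rewrite /J Rintegral_cst // mul0r. Qed.

Lemma local_step del : 0 < del -> forall s, 0 <= s -> s < T ->
  exists eta : R, 0 < eta /\ forall y, s <= y -> y <= T -> y - s < eta ->
    `|Phi y - Phi s| <= 2 * (Hh del y - Hh del s).
Proof.
move=> del0 s s0 sT.
have sT' := ltW sT.
case: (ltgtP (D s) 0) => Ds.
- have e0 : 0 < - D s by rewrite oppr_gt0.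
  have [eta [eta0 He]] := Dc s0 sT' e0.
  exists eta; split => // y sy yT ys.
  have Dn w : s <= w -> w <= y -> D w < 0.
    move=> sw wy; have := He w (le_trans s0 sw) (le_trans wy yT).
    rewrite ger0_norm ?subr_ge0 // => /(_ ltac:(lra)).
    rewrite ltr_norml => /andP[_]; lra.
  rewrite PhiD // HhD //.
  have -> : J fD s y = 0.
    rewrite -(J0 s y); apply: eq_Rintegral => w; rewrite inE /= in_itv /=.
    move=> /andP[sw wy]; rewrite /fD ifF //; apply/negbTE; rewrite -leNgt.
    by apply/ltW; apply: Dn => //; exact: ltW.
  have -> : Num.max (D y) 0 = 0 by apply/max_idPr/ltW/Dn.
  have -> : Num.max (D s) 0 = 0 by apply/max_idPr/ltW.
  by rewrite !subrr normr0 mulr_ge0 // J_ge0.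
- have e0 : 0 < D s by [].
  have [eta [eta0 He]] := Dc s0 sT' e0.
  exists eta; split => // y sy yT ys.
  have Dp w : s <= w -> w <= y -> 0 < D w.
    move=> sw wy; have := He w (le_trans s0 sw) (le_trans wy yT).
    rewrite ger0_norm ?subr_ge0 // => /(_ ltac:(lra)).
    rewrite ltr_norml => /andP[+ _]; lra.
  rewrite PhiD // HhD //.
  have -> : J fD s y = D y - D s.
    rewrite Dint //; apply: eq_Rintegral => w; rewrite inE /= in_itv /=.
    move=> /andP[sw wy]; rewrite /fD ifT //; apply: Dp => //; exact: ltW.
  have -> : Num.max (D y) 0 = D y by apply/max_idPl/ltW/Dp.
  have -> : Num.max (D s) 0 = D s by apply/max_idPl/ltW.
  by rewrite subrr normr0 mulr_ge0 // J_ge0.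
- have [eta [eta0 He]] := Dc s0 sT' del0.
  exists eta; split => // y sy yT ys.
  have Db w : s <= w -> w <= y -> `|D w| < del.
    move=> sw wy; have := He w (le_trans s0 sw) (le_trans wy yT).
    rewrite ger0_norm ?subr_ge0 // Ds subr0; apply; lra.
  have fh w : s <= w -> w <= y -> `|fD w| <= hD del w.
    move=> sw wy; have := Db w sw wy; rewrite /fD /hD.
    case: ifP => // Dw; last by rewrite normr0.
    by rewrite ltr_norml => /andP[_ ->].
  have Jb x : s <= x -> x <= y -> `|J fD x y| <= J (hD del) x y.
    move=> sx xy; have x0 := le_trans s0 sx.
    apply: (le_trans (le_normr_Rintegral _ _)) => //; first exact: intS ifD x0 yT.
    apply: le_Rintegral => //.
    - exact: integrable_norm (intS ifD x0 yT).
    - exact: intS (ihD del) x0 yT.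
    - move=> w; rewrite /= in_itv /= => /andP[xw wy].
      apply: fh => //; exact: le_trans sx (ltW xw).
  rewrite PhiD // HhD //.
  have -> : Num.max (D s) 0 = 0 by rewrite Ds maxxx.
  have mb : Num.max (D y) 0 <= J (hD del) s y.
    have [Dy|Dy] := leP (D y) 0.
      exact: J_ge0.
    have [z [sz zy Dz Hz]] := last_nonpos s0 sy yT (ltac:(by rewrite Ds)).
    have z0 := le_trans s0 sz.
    have -> : D y = (D y - D z) + D z by rewrite subrK.
    rewrite Dint //.
    have -> : \int[mu]_(s0 in `]z, y]) d s0 = J fD z y.
      apply: eq_Rintegral => w; rewrite inE /= in_itv /= => /andP[zw wy].
      by rewrite /fD ifT //; apply: Hz.
    have := Jb z sz zy.
    have := Jsplit (ihD del) s0 sz zy yT.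
    have := J_ge0 del s z.
    move=> h1 h2 h3.
    have := ler_norm (J fD z y); lra.
  have := Jb s (lexx s) sy.
  rewrite subr0.
  move=> h; apply: (le_trans (ler_normB _ _)).
  have m0 : 0 <= Num.max (D y) 0 by rewrite le_max lexx orbT.
  rewrite (ger0_norm m0); lra.
Qed.


Lemma int00 (g : R -> R) : \int[mu]_(s in `[0, 0]) g s = 0.
Proof. by rewrite set_itv1 Rintegral_set1. Qed.

Lemma Phi0 : Phi 0 = 0.
Proof.
rewrite /Phi int00 HD // int00 addr0.
by have /max_idPr -> := D00; rewrite subr0.
Qed.

Lemma Hh0 del : Hh del 0 = 0.
Proof. exact: int00. Qed.

Lemma maxdiff (a b : R) : `|Num.max a 0 - Num.max b 0| <= `|a - b|.
Proof.
have h1 := ler_norm (a - b).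
have h2 : b - a <= `|a - b| by rewrite distrC ler_norm.
case: (leP a 0) => ha; case: (leP b 0) => hb;
  rewrite ler_norml; apply/andP; split; lra.
Qed.

Lemma Jd_bound del x y : 0 <= x -> x <= y -> y <= T ->
  `|Phi y - Phi x| <= 2 * J (fun s => `|d s|) x y /\
  Hh del y - Hh del x <= J (fun s => `|d s|) x y.
Proof.
move=> x0 xy yT.
have ixy := intS intd x0 yT.
split.
- rewrite PhiD //; apply: (le_trans (ler_normB _ _)).
  have h1 : `|J fD x y| <= J (fun s => `|d s|) x y.
    apply: (le_trans (le_normr_Rintegral _ _)) => //; first exact: intS ifD x0 yT.
    apply: le_Rintegral => //.
    - exact: integrable_norm (intS ifD x0 yT).
    - exact: integrable_norm.
    - move=> w _; rewrite /fD; case: ifP => _ //.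
      by rewrite normr0.
  have h2 : `|Num.max (D y) 0 - Num.max (D x) 0| <= J (fun s => `|d s|) x y.
    apply: (le_trans (maxdiff _ _)); rewrite Dint //.
    exact: le_normr_Rintegral.
  lra.
- rewrite HhD //; apply: le_Rintegral => //.
  + exact: intS (ihD del) x0 yT.
  + exact: integrable_norm.
  + move=> w _; rewrite /hD; case: ifP => _; last by [].
    by case: ifP.
Qed.

Lemma Phi_bound del t : 0 < del -> 0 <= t -> t <= T ->
  `|Phi t| <= 2 * Hh del t.
Proof.
move=> del0 t0 tT.
have cont (sg : R) : `|sg| = 1 -> forall e : R, 0 < e -> exists dl : R, 0 < dl /\
    forall x y, 0 <= x -> x <= y -> y <= t -> y - x < dl ->
    `|(2 * Hh del y + sg * Phi y) - (2 * Hh del x + sg * Phi x)| < e.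
  move=> sg1 e e0.
  have e40 : 0 < e / 4 by rewrite divr_gt0.
  have [dl [dl0 Hd]] := small_int intd e40.
  exists dl; split => // x y x0 xy yt yx.
  have yT := le_trans yt tT.
  have := Hd x y x0 xy yT yx; rewrite -/(J _ x y) => hJ.
  have [h1 h2] := Jd_bound del x0 xy yT.
  have h3 := HhD del x0 xy yT.
  have h4 := J_ge0 del x y.
  have -> : 2 * Hh del y + sg * Phi y - (2 * Hh del x + sg * Phi x) =
     2 * (Hh del y - Hh del x) + sg * (Phi y - Phi x) by ring.
  apply: (le_lt_trans (ler_normD _ _)).
  rewrite normrM normrM sg1 mul1r (ger0_norm (ltW (ltr0Sn _ 1))).
  rewrite ger0_norm; last by rewrite h3.
  lra.
have loc (sg : R) : `|sg| = 1 -> forall s, 0 <= s -> s < t -> exists eta : R, 0 < eta /\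
    forall y, s <= y -> y <= t -> y - s < eta ->
    2 * Hh del s + sg * Phi s <= 2 * Hh del y + sg * Phi y.
  move=> sg1 s s0 st.
  have [eta [eta0 He]] := local_step del0 s0 (lt_le_trans st tT).
  exists eta; split => // y sy yt ys.
  have := He y sy (le_trans yt tT) ys.
  have : - `|Phi y - Phi s| <= sg * (Phi y - Phi s).
    apply: lerNnormlW; by rewrite normrM sg1 mul1r.
  lra.
have h1 := mono_right t0 (cont 1 (normr1 _)) (loc 1 (normr1 _)).
have h2 := mono_right t0 (cont (-1) (normrN1 _)) (loc (-1) (normrN1 _)).
rewrite Phi0 Hh0 in h1 h2.
rewrite ler_norml; apply/andP; split; lra.
Qed.


Lemma Hh_small t : 0 <= t -> t <= T -> forall e : R, 0 < e ->
  exists del : R, 0 < del /\ Hh del t < e.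
Proof.
move=> t0 tT e e0.
have sub : `[0, t] `<=` `[0, T] by apply: subset_itvl; rewrite bnd_simp.
pose f_ := fun n : nat => EFin \o hD (n.+1%:R^-1).
have mf_ n : measurable_fun `[0, t] (f_ n).
  apply/measurable_EFinP; apply: measurable_funS (mhD _) => //.
have ig : mu.-integrable `[0, t] (EFin \o (Num.norm \o d)).
  apply: integrable_norm; apply: integrableS intd => //.
have f_f : {ae mu, forall x, `[0, t]%classic x -> f_ ^~ x @ \oo --> 0%E}.
  apply: aeW => x _ /=.
  apply: cvg_near_cst.
  have [Dx|Dx] := ltP 0 (D x).
    near=> n; rewrite /f_ /= /hD Dx.
    have : n.+1%:R^-1 < D x.
      by near: n; exact: (near_infty_natSinv_lt (PosNum Dx)).
    by move=> /ltW; rewrite leNgt => /negbTE ->.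
  by apply: nearW => n; rewrite /f_ /= /hD ltNge Dx.
have f_g : {ae mu, forall x n, `[0, t]%classic x -> (`|f_ n x| <= (EFin \o (Num.norm \o d)) x)%E}.
  apply: aeW => x n _ /=; rewrite lee_fin /hD.
  case: ifP => _; last by rewrite normr0.
  by case: ifP => _; rewrite ?normr_id // normr0.
have [_ _] := @dominated_convergence _ _ _ mu _ (measurable_itv `[0, t]) f_ (fun _ => 0%E)
  (EFin \o (Num.norm \o d)) mf_ (measurable_cst _) f_f ig f_g.
rewrite integral0 => /fine_cvgP [_] /cvgrPdist_lt /(_ e e0) [N _ HN].
exists (N.+1%:R^-1); split; first by rewrite invr_gt0.
have := HN N (leqnn N); rewrite /= sub0r normrN.
move=> h; apply: le_lt_trans h; exact: ler_norm.
Unshelve. all: by end_near.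
Qed.

Lemma core t : 0 <= t -> t <= T ->
  Num.max (D t) 0 = \int[mu]_(s in `[0, t]) fD s.
Proof.
move=> t0 tT.
suff : Phi t = 0 by rewrite /Phi => /eqP; rewrite subr_eq0 => /eqP.
apply/eqP; rewrite -normr_eq0 eq_le normr_ge0 andbT.
apply/ler_addgt0Pr => e e0; rewrite add0r.
have e20 : 0 < e / 2 by rewrite divr_gt0.
have [del [del0 Hd]] := Hh_small t0 tT e20.
have := Phi_bound del0 t0 tT; lra.
Qed.

End Core.

Section Swap.
Context {R : realType} {N : nat}.
Local Notation mu := (@lebesgue_measure R).

Definition cnd (i j : 'I_N) (x : 'I_N -> R) : bool := (i < j)%N && (x i < x j).
Definition swp (i j : 'I_N) (x v : 'I_N -> R) : 'I_N -> R :=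
  if cnd i j x then (fun k => v (tperm i j k)) else v.

Lemma sum_swp i j x v (F : R -> R) :
  \sum_(k < N) F (swp i j x v k) = \sum_(k < N) F (v k).
Proof.
rewrite /swp; case: ifP => // _.
by rewrite [RHS](reindex_inj (@perm_inj _ (tperm i j))).
Qed.

Lemma mean_swp i j x v : mean (swp i j x v) = mean v.
Proof. by rewrite /mean (sum_swp i j x v id). Qed.

Lemma Vfun_swp i j x v : Vfun (swp i j x v) = Vfun v.
Proof. by rewrite /Vfun (sum_swp i j x v (fun r => r ^+ 2)). Qed.

Lemma RintE (S : set R) (h : R -> R) : measurable S ->
  mu.-integrable S (EFin \o h) ->
  (\int[mu]_(x in S) (h x)%:E)%E = (\int[mu]_(x in S) h x)%:E.
Proof. by move=> mS ih; rewrite /Rintegral fineK //; exact: integrable_fin_num. Qed.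

Variables (T M : R) (xi0 : 'I_N -> R).
Hypothesis T0 : 0 <= T.
Hypothesis Hord : forall i j : 'I_N, (i < j)%N -> xi0 j <= xi0 i.

Lemma rhs_swp i j A X k s :
  rhs (fun s => swp i j (X s) (A s)) (fun s => swp i j (X s) (X s)) k s =
  if cnd i j (X s) then rhs A X (tperm i j k) s else rhs A X k s.
Proof. by rewrite /rhs mean_swp /swp; case: ifP. Qed.

Lemma solR A X : is_solution T xi0 A X -> forall l t, 0 <= t -> t <= T ->
  mu.-integrable `[0, t] (EFin \o rhs A X l) /\
  X t l = xi0 l + \int[mu]_(s in `[0, t]) rhs A X l s.
Proof.
move=> sol l t t0 tT; have [ig e] := sol l t (ltac:(by rewrite t0 tT)).
split => //; move: e; rewrite RintE // => -[<-]; lra.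
Qed.

Lemma mX A X l : is_solution T xi0 A X -> measurable_fun `[0, T] (fun s => X s l).
Proof.
move=> sol; have [ig _] := solR sol l T0 (lexx T).
apply: (@mD _ T (xi0 l) (rhs A X l) (fun s => X s l) T0 ig) => t t0 tT.
by have [] := solR sol l t0 tT.
Qed.


Lemma intEq (S : set R) (f h : R -> R) : measurable S ->
  mu.-integrable S (EFin \o f) -> {in S, f =1 h} -> mu.-integrable S (EFin \o h).
Proof.
move=> mS i fh; have H := @eq_integrable _ _ _ mu S mS (EFin \o f) (EFin \o h).
by apply: (H _ i) => s sS; rewrite /= fh.
Qed.

Lemma intD' (S : set R) (f h : R -> R) : measurable S ->
  mu.-integrable S (EFin \o f) -> mu.-integrable S (EFin \o h) ->
  mu.-integrable S (EFin \o (fun s => f s + h s)).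
Proof.
move=> mS if1 if2; have H := @integrableD _ _ _ mu S mS _ _ if1 if2.
by apply: (@eq_integrable _ _ _ mu S mS _ _ _ H) => s _ /=; rewrite EFinD.
Qed.

Lemma intB' (S : set R) (f h : R -> R) : measurable S ->
  mu.-integrable S (EFin \o f) -> mu.-integrable S (EFin \o h) ->
  mu.-integrable S (EFin \o (fun s => f s - h s)).
Proof.
move=> mS if1 if2; have H := @integrableB _ _ _ mu S mS _ _ if1 if2.
by apply: (@eq_integrable _ _ _ mu S mS _ _ _ H) => s _ /=; rewrite EFinB.
Qed.

Lemma swap_sol i j A X : is_solution T xi0 A X ->
  is_solution T xi0 (fun s => swp i j (X s) (A s)) (fun s => swp i j (X s) (X s)).
Proof.
move=> sol k t /andP[t0 tT].
have [ij|nij] := boolP (i < j)%N; last first.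
  have E s v : swp i j (X s) v = v by rewrite /swp /cnd (negbTE nij).
  have -> : (fun s => swp i j (X s) (A s)) = A by apply/funext => s; rewrite E.
  have -> : (fun s => swp i j (X s) (X s)) = X by apply/funext => s; rewrite E.
  rewrite E; exact: (sol k t (ltac:(by rewrite t0 tT))).
pose g l := rhs A X l.
have igT l : mu.-integrable `[0, T] (EFin \o g l) by have [] := solR sol l T0 (lexx T).
have igt l : mu.-integrable `[0, t] (EFin \o g l).
  by apply: integrableS (igT l) => //; apply: subset_itvl; rewrite bnd_simp.
have eX l t' : 0 <= t' -> t' <= T -> X t' l = xi0 l + \int[mu]_(s in `[0, t']) g l s.
  by move=> a b; have [] := solR sol l a b.
pose Dd s := X s j - X s i.
pose dd s := g j s - g i s.
have idd : mu.-integrable `[0, T] (EFin \o dd) by exact: intB'.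
have HD' t' : 0 <= t' -> t' <= T ->
    Dd t' = (xi0 j - xi0 i) + \int[mu]_(s in `[0, t']) dd s.
  move=> a b; rewrite /Dd /dd RintegralB //.
  - rewrite (eX j t' a b) (eX i t' a b); lra.
  - by apply: integrableS (igT j) => //; apply: subset_itvl; rewrite bnd_simp.
  - by apply: integrableS (igT i) => //; apply: subset_itvl; rewrite bnd_simp.
have D00 : xi0 j - xi0 i <= 0 by rewrite subr_le0 Hord.
have C := core T0 D00 idd HD' t0 tT.
have ifd : mu.-integrable `[0, t] (EFin \o fD dd Dd).
  by apply: integrableS (ifD T0 idd HD') => //; apply: subset_itvl; rewrite bnd_simp.
have cE s : cnd i j (X s) = (0 < Dd s) by rewrite /cnd ij /= /Dd subr_gt0.
have ji : j != i by rewrite neq_ltn ij orbT.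
have [->|ki] := eqVneq k i.
  have E : {in `[0, t]%classic, (fun s => g i s + fD dd Dd s) =1
      rhs (fun s => swp i j (X s) (A s)) (fun s => swp i j (X s) (X s)) i}.
    move=> s _; rewrite rhs_swp cE /fD /dd tpermL -/(g j) -/(g i).
    by case: ifP => _; [ring | rewrite addr0].
  have ii := intEq (measurable_itv _) (intD' (measurable_itv _) (igt i) ifd) E.
  split => //; rewrite RintE //; congr EFin.
  transitivity (\int[mu]_(x in `[0, t]) (g i x + fD dd Dd x)); last first.
    by apply: eq_Rintegral => s st; rewrite E.
  rewrite RintegralD // -C.
  rewrite /swp cE; case: ifP => h /=.
    have /max_idPl -> : 0 <= Dd t by apply: ltW.
    by rewrite tpermL /Dd (eX j t t0 tT) (eX i t t0 tT); ring.
  have /max_idPr -> : Dd t <= 0 by rewrite leNgt h.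
  by rewrite (eX i t t0 tT); ring.
have [->|kj] := eqVneq k j.
  have E : {in `[0, t]%classic, (fun s => g j s - fD dd Dd s) =1
      rhs (fun s => swp i j (X s) (A s)) (fun s => swp i j (X s) (X s)) j}.
    move=> s _; rewrite rhs_swp cE /fD /dd tpermR -/(g j) -/(g i).
    by case: ifP => _; [ring | rewrite subr0].
  have ii := intEq (measurable_itv _) (intB' (measurable_itv _) (igt j) ifd) E.
  split => //; rewrite RintE //; congr EFin.
  transitivity (\int[mu]_(x in `[0, t]) (g j x - fD dd Dd x)); last first.
    by apply: eq_Rintegral => s st; rewrite E.
  rewrite RintegralB // -C.
  rewrite /swp cE; case: ifP => h /=.
    have /max_idPl -> : 0 <= Dd t by apply: ltW.
    by rewrite tpermR /Dd (eX j t t0 tT) (eX i t t0 tT); ring.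
  have /max_idPr -> : Dd t <= 0 by rewrite leNgt h.
  by rewrite (eX j t t0 tT); ring.
have E : {in `[0, t]%classic, g k =1
    rhs (fun s => swp i j (X s) (A s)) (fun s => swp i j (X s) (X s)) k}.
  by move=> s _; rewrite rhs_swp tpermD 1?eq_sym //; case: ifP.
have ii := intEq (measurable_itv _) (igt k) E.
split => //; rewrite RintE //; congr EFin.
transitivity (\int[mu]_(x in `[0, t]) g k x); last first.
  by apply: eq_Rintegral => s st; rewrite E.
rewrite /swp; case: ifP => _ /=; rewrite ?tpermD 1?eq_sym // (eX k t t0 tT); ring.
Qed.


Lemma swap_adm i j A X : admissible T M A -> is_solution T xi0 A X ->
  admissible T M (fun s => swp i j (X s) (A s)).
Proof.
move=> [mA bA] sol; split.
- move=> k; rewrite /swp /cnd.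
  have [ij|nij] := boolP (i < j)%N; last first.
    by apply: (eq_measurable_fun (fun s => A s k)) => // s _; rewrite andFb.
  apply: (eq_measurable_fun (fun s => if X s i < X s j then A s (tperm i j k) else A s k)).
    by move=> s _; rewrite andTb; case: ifP.
  apply: measurable_fun_if => //.
  + by apply: measurable_fun_ltr; exact: mX sol.
  + by apply: measurable_funS (mA _) => //; exact: subIsetl.
  + by apply: measurable_funS (mA _) => //; exact: subIsetl.
- move=> t tT; have [b1 b2] := bA t tT; split; last by rewrite (sum_swp i j _ _ id).
  by move=> k; rewrite /swp; case: ifP.
Qed.

Definition stepT i j (p : (R -> 'I_N -> R) * (R -> 'I_N -> R)) :=
  ((fun s => swp i j (p.1 s) (p.1 s)), (fun s => swp i j (p.1 s) (p.2 s))).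

Definition stage i (p : (R -> 'I_N -> R) * (R -> 'I_N -> R)) :=
  foldl (fun q j => stepT i j q) p (enum 'I_N).

Definition netT p := foldl (fun q i => stage i q) p (enum 'I_N).

Definition Good (p : (R -> 'I_N -> R) * (R -> 'I_N -> R)) (v : R) :=
  [/\ admissible T M p.2, is_solution T xi0 p.2 p.1 & Vfun (p.1 T) = v].

Lemma good_step i j p v : Good p v -> Good (stepT i j p) v.
Proof.
case=> a s e; split => /=.
- exact: swap_adm.
- exact: swap_sol.
- by rewrite Vfun_swp.
Qed.

Lemma good_net p v : Good p v -> Good (netT p) v.
Proof.
rewrite /netT; elim: (enum 'I_N) p => //= i l IH p gp; apply: IH.
rewrite /stage; elim: (enum 'I_N) p gp => //= j l' IH' p gp; apply: IH'.
exact: good_step.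
Qed.

End Swap.

Section Sort.
Context {R : realType} {N : nat}.

Definition stagev (i : 'I_N) (x : 'I_N -> R) :=
  foldl (fun y j => swp i j y y) x (enum 'I_N).
Definition netv (x : 'I_N -> R) := foldl (fun y i => stagev i y) x (enum 'I_N).

Lemma stage_fst i p s : (stage i p).1 s = stagev i (p.1 s).
Proof.
by rewrite /stage /stagev; elim: (enum 'I_N) p => //= j l IH p; rewrite ?IH.
Qed.

Lemma net_fst p s : (netT p).1 s = netv (p.1 s) :> ('I_N -> R).
Proof.
by rewrite /netT /netv; elim: (enum 'I_N) p => //= i l IH p; rewrite ?IH ?stage_fst.
Qed.

Definition Pp (p : 'I_N) (x : 'I_N -> R) := forall q : 'I_N, (p < q)%N -> x q <= x p.

Lemma swp_keep (p i j : 'I_N) (x : 'I_N -> R) : (p < i)%N -> Pp p x -> Pp p (swp i j x x).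
Proof.
move=> pi Px; rewrite /swp; case: ifP => // /andP[ij _] q pq.
have pj := ltn_trans pi ij.
have -> : tperm i j p = p.
  by apply: tpermD; apply/eqP => h; [rewrite h ltnn in pi | rewrite h ltnn in pj].
by case: tpermP => [_|_|_ _]; apply: Px.
Qed.

Lemma stagev_keep (p i : 'I_N) (x : 'I_N -> R) : (p < i)%N -> Pp p x -> Pp p (stagev i x).
Proof.
move=> pi; rewrite /stagev; elim: (enum 'I_N) x => //= j l IH x Px.
by apply: IH; exact: swp_keep.
Qed.

Lemma stagev_sets (i : 'I_N) (x : 'I_N -> R) : Pp i (stagev i x).
Proof.
suff H : forall (l l0 : seq 'I_N) (y : 'I_N -> R),
    (forall q, q \in l0 -> (i < q)%N -> y q <= y i) ->
    forall q, q \in l0 ++ l -> (i < q)%N ->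
      foldl (fun y j => swp i j y y) y l q <= foldl (fun y j => swp i j y y) y l i.
  move=> q iq; apply: (H (enum 'I_N) [::]) => //; by rewrite mem_enum.
elim=> [|j l IH] l0 y Inv q.
  by rewrite cats0; exact: Inv.
rewrite -cat_rcons => ql iq /=; apply: IH ql iq => {q}q.
rewrite mem_rcons inE => /orP[/eqP ->|ql0] iq.
  rewrite /swp /cnd iq /=; case: ifP => h.
    by rewrite tpermR tpermL ltW.
  by rewrite leNgt h.
have qi : q != i by apply/eqP => h; rewrite h ltnn in iq.
rewrite /swp /cnd; case: ifP => [/andP[ij h]|_]; last exact: Inv.
have [qj|qj] := eqVneq q j.
  by rewrite qj tpermR tpermL ltW.
rewrite tpermL tpermD 1?eq_sym //.
apply: le_trans (Inv q ql0 iq) (ltW h).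
Qed.

Lemma pairwise_enum : pairwise (fun a b : 'I_N => (a < b)%N) (enum 'I_N).
Proof.
have := iota_ltn_sorted 0 N; rewrite (sorted_pairwise ltn_trans) -val_enum_ord.
by rewrite pairwise_map.
Qed.

Lemma netv_sorted (x : 'I_N -> R) : forall p q : 'I_N, (p < q)%N -> netv x q <= netv x p.
Proof.
suff H : forall L, pairwise (fun a b : 'I_N => (a < b)%N) L -> forall x p,
    p \in L -> Pp p (foldl (fun y i => stagev i y) x L).
  by move=> p q pq; apply: (H _ pairwise_enum) => //; rewrite mem_enum.
elim/last_ind => [//|L i IH] + y p.
rewrite pairwise_rcons => /andP[/allP aL pL].
rewrite foldl_rcons mem_rcons inE => /orP[/eqP ->|pL']; first exact: stagev_sets.
apply: stagev_keep; first exact: aL.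
exact: IH.
Qed.

End Sort.

Theorem lemma1 (R : realType) (N : nat) (T M : R) (xi0 : 'I_N -> R)
  (HN : (1 <= N)%N) (HT : 0 < T) (HM : 0 < M)
  (Hmean : 0 < mean xi0)
  (Hord : forall i j : 'I_N, (i < j)%N -> xi0 j <= xi0 i)
  (Hex : exists a xi, optimal T M xi0 a xi) :
  exists (a : R -> 'I_N -> R) (xi : R -> 'I_N -> R),
    optimal T M xi0 a xi /\
    forall t : R, 0 <= t <= T ->
      forall i j : 'I_N, (i < j)%N -> xi t j <= xi t i.
Proof.
have T0 := ltW HT.
case: Hex => a [xi [adm [sol opt]]].
have G : Good T M xi0 (xi, a) (Vfun (xi T)) by split.
have [adm' sol' V'] := good_net T0 Hord G.
exists (netT (xi, a)).2, (netT (xi, a)).1; split.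
  split; first exact: adm'.
  split; first exact: sol'.
  by move=> b eta hb he; rewrite V' /=; exact: (opt b eta hb he).
move=> t _ i j ij; rewrite !net_fst; exact: netv_sorted.
Qed.
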